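(* Let $\{x^k\}_k$, $\{z^k\}_k$ be generated by the normal map-based stochastic proximal gradient method described in the context. Then for all integers $0\le m<n$ and every sample $\omega$ with $L(\omega)<\infty$, writing $\tau=\tau_{m,n}$ and $e=e^{m,n}$, \begin{align*} \|F^\lambda_{\mathrm{nor}}(z^n)\|^2&\le\Big(1-\frac{\tau}{\lambda}\Big)^2\|F^\lambda_{\mathrm{nor}}(z^m)\|^2+\Big(L^2+\frac{2L}{\lambda}+\frac1{\lambda^2}\Big)\|x^n-x^m\|^2+\frac{1}{\lambda^2}\|e\|^2\\ &\quad+\frac2\lambda\Big(1-\frac\tau\lambda\Big)\big\langle F^\lambda_{\mathrm{nor}}(z^m),\lambda(\nabla f(x^n)-\nabla f(x^m))-(x^n-x^m)+e\big\rangle\\ &\quad+\frac2\lambda\langle\nabla f(x^n)-\nabla f(x^m),e\rangle-\frac{2}{\lambda^2}\langle e,x^n-x^m\rangle. \end{align*}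
   Context: Let $\varphi:\mathbb{R}^d\to(-\infty,\infty]$ be convex, lower semicontinuous and proper, let $f:\mathbb{R}^d\to\mathbb{R}$ be continuously differentiable on an open set containing $\mathrm{dom}\,\varphi$, and set $\psi=f+\varphi$. For $\lambda>0$ let $\mathrm{prox}_{\lambda\varphi}(x)=\operatorname{argmin}_y\{\varphi(y)+\frac{1}{2\lambda}\|x-y\|^2\}$, $\mathrm{env}_{\lambda\varphi}$ the Moreau envelope with $\nabla\mathrm{env}_{\lambda\varphi}(x)=(x-\mathrm{prox}_{\lambda\varphi}(x))/\lambda$, and $F^\lambda_{\mathrm{nor}}(z)=\nabla f(\mathrm{prox}_{\lambda\varphi}(z))+\frac1\lambda(z-\mathrm{prox}_{\lambda\varphi}(z))$. Method: on a filtered probability space $(\Omega,\mathcal F,\{\mathcal F_k\}_k,\mathbb P)$, with $\lambda>0$, step sizes $\alpha_k>0$, deterministic $z^0$, $x^0=\mathrm{prox}_{\lambda\varphi}(z^0)$, and $\mathcal F_{k+1}$-measurable random vectors $g^k$, set $z^{k+1}=z^k-\alpha_k(g^k+\nabla\mathrm{env}_{\lambda\varphi}(z^k))$, $x^{k+1}=\mathrm{prox}_{\lambda\varphi}(z^{k+1})$. Let $e^k=g^k-\nabla f(x^k)$. $L(\omega)=\sup_{\bar x\in\mathrm{cl}(\mathrm{conv}\{x^k(\omega)\}_k)}\mathrm{lip}\,\nabla f(\bar x)$ with $\mathrm{lip}\,\nabla f(\bar x)=\limsup_{x,x'\to\bar x,\,x\ne x'}\|\nabla f(x)-\nabla f(x')\|/\|x-x'\|$.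 $\tau_{m,n}=\sum_{i=m}^{n-1}\alpha_i$ and $e^{m,n}=-\sum_{i=m}^{n-1}\alpha_i[F^\lambda_{\mathrm{nor}}(z^i)-F^\lambda_{\mathrm{nor}}(z^m)]-\sum_{i=m}^{n-1}\alpha_ie^i$. *)

(* Defs.v *)
From HB Require Import structures.
From mathcomp Require Import all_boot all_order all_algebra.
From mathcomp Require Import all_classical all_reals all_analysis.
Set Implicit Arguments. Unset Strict Implicit. Unset Printing Implicit Defensive.
Import Order.TTheory GRing.Theory Num.Theory.
Local Open Scope classical_set_scope.
Local Open Scope ring_scope.

Section Defs.
Variables (R : realType) (d : nat).
Notation vec := 'rV[R]_d.

Definition dotv (u v : vec) : R := \sum_(i < d) u ord0 i * v ord0 i.
Definition enorm (u : vec) : R := Num.sqrt (dotv u u).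

Definition eopen (U : set vec) : Prop :=
  forall x, U x -> exists2 r : R, 0 < r & forall y, enorm (y - x) < r -> U y.
Definition eclosure (A : set vec) : set vec :=
  [set x | forall e : R, 0 < e -> exists y, A y /\ enorm (x - y) < e].
Definition conv_hull (S : set vec) : set vec :=
  [set y | exists n (w : 'I_n -> R) (p : 'I_n -> vec),
     [/\ (forall i, 0 <= w i), \sum_(i < n) w i = 1, (forall i, S (p i))
       & y = \sum_(i < n) w i *: p i]].

Definition C1_on (U : set vec) (f : vec -> R) (gradf : vec -> vec) : Prop :=
  (forall x, U x -> forall e : R, 0 < e -> exists2 r : R, 0 < r &
      forall y, enorm (y - x) < r ->
        `| f y - f x - dotv (gradf x) (y - x) | <= e * enorm (y - x)) /\
  (forall x, U x -> forall e : R, 0 < e -> exists2 r : R, 0 < r &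
      forall y, U y -> enorm (y - x) < r -> enorm (gradf y - gradf x) < e).

(* lip G xb = limsup_{x,x' -> xb, x <> x'} |G x - G x'| / |x - x'|, in \bar R
   (infimum over radii r > 0 of the supremum of the difference quotients
    over distinct x, x' in the open Euclidean ball of radius r around xb). *)
Definition lip (G : vec -> vec) (xb : vec) : \bar R :=
  ereal_inf [set s | exists2 r : R, 0 < r &
    s = ereal_sup [set q | exists x x' : vec,
          [/\ enorm (x - xb) < r, enorm (x' - xb) < r, x != x'
            & q = (enorm (G x - G x') / enorm (x - x'))%:E]]].

Definition dom (phi : vec -> \bar R) : set vec := [set x | (phi x < +oo)%E].
Definition proper_fun (phi : vec -> \bar R) : Prop :=
  (forall x, phi x != -oo%E) /\ (exists x, phi x != +oo%E).
Definition convex_fun (phi : vec -> \bar R) : Prop :=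
  forall (x y : vec) (t : R), 0 < t < 1 ->
    (phi (t *: x + (1 - t) *: y)%R <= t%:E * phi x + (1 - t)%:E * phi y)%E.
Definition lsc (phi : vec -> \bar R) : Prop :=
  forall (x : vec) (a : R), (a%:E < phi x)%E ->
    exists2 r : R, 0 < r & forall y, enorm (y - x) < r -> (a%:E < phi y)%E.

Definition is_prox (phi : vec -> \bar R) (lam : R) (p : vec -> vec) : Prop :=
  forall x y : vec,
    (phi (p x) + ((2 * lam)^-1 * enorm (x - p x) ^+ 2)%:E
       <= phi y + ((2 * lam)^-1 * enorm (x - y) ^+ 2)%:E)%E.

Definition grad_env (p : vec -> vec) (lam : R) (x : vec) : vec :=
  lam^-1 *: (x - p x).
Definition Fnor (gradf : vec -> vec) (p : vec -> vec) (lam : R) (z : vec) : vec :=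
  gradf (p z) + lam^-1 *: (z - p z).
End Defs.

Definition filtration d (Omega : measurableType d) (F : nat -> set (set Omega)) : Prop :=
  [/\ (forall k, sigma_algebra setT (F k)),
      (forall k, F k `<=` F k.+1) &
      (forall k, F k `<=` measurable)].

Definition vec_measurable_wrt d (Omega : measurableType d) (R : realType) (n : nat)
   (G : set (set Omega)) (X : Omega -> 'rV[R]_n) : Prop :=
  forall (i : 'I_n) (B : set R), measurable B -> G [set w | B (X w ord0 i)].

(* Main.v *)
Require Import Defs.
From HB Require Import structures.
From mathcomp Require Import all_boot all_order all_algebra.
From mathcomp Require Import all_classical all_reals all_analysis.
From mathcomp Require Import ring lra.
Import Order.TTheory GRing.Theory Num.Theory.
Local Open Scope classical_set_scope.
Local Open Scope ring_scope.
Section Vec.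
Variables (R : realType) (d : nat).
Notation vec := 'rV[R]_d.
Implicit Types (u v w : vec) (a b : R).

Lemma dotvC u v : dotv u v = dotv v u.
Proof. by rewrite /dotv; apply: eq_bigr => i _; rewrite mulrC. Qed.
Lemma dotvDl u v w : dotv (u + v) w = dotv u w + dotv v w.
Proof. by rewrite /dotv -big_split; apply: eq_bigr => i _; rewrite !mxE mulrDl. Qed.
Lemma dotvDr u v w : dotv w (u + v) = dotv w u + dotv w v.
Proof. by rewrite dotvC dotvDl !(dotvC w). Qed.
Lemma dotvZl a u v : dotv (a *: u) v = a * dotv u v.
Proof. by rewrite /dotv mulr_sumr; apply: eq_bigr => i _; rewrite !mxE mulrA. Qed.
Lemma dotvZr a u v : dotv v (a *: u) = a * dotv v u.
Proof. by rewrite dotvC dotvZl dotvC. Qed.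
Lemma dotv_ge0 u : 0 <= dotv u u.
Proof. by apply: sumr_ge0 => i _; rewrite -expr2 sqr_ge0. Qed.
Lemma dotv_eq0 u : dotv u u = 0 -> u = 0.
Proof.
move=> h; apply/matrixP => i j; rewrite mxE (ord1 i).
have H : forall k : 'I_d, true -> 0 <= u ord0 k * u ord0 k by move=> k _; rewrite -expr2 sqr_ge0.
have : u ord0 j * u ord0 j = 0 by apply: (psumr_eq0P H h).
by move/eqP; rewrite mulf_eq0 orbb => /eqP.
Qed.
Lemma enorm_sq u : enorm u ^+ 2 = dotv u u.
Proof. by rewrite /enorm sqr_sqrtr // dotv_ge0. Qed.
Lemma enorm_ge0 u : 0 <= enorm u.
Proof. exact: sqrtr_ge0. Qed.
Lemma dot2 a b u v : dotv (a *: u + b *: v) (a *: u + b *: v) =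
  a ^+ 2 * dotv u u + 2 * a * b * dotv u v + b ^+ 2 * dotv v v.
Proof. rewrite !(dotvDl, dotvDr, dotvZl, dotvZr) (dotvC v u); ring. Qed.
Lemma dot3 a b c u v w : dotv (a *: u + b *: v + c *: w) (a *: u + b *: v + c *: w) =
  a ^+ 2 * dotv u u + b ^+ 2 * dotv v v + c ^+ 2 * dotv w w
  + 2 * a * b * dotv u v + 2 * a * c * dotv u w + 2 * b * c * dotv v w.
Proof. rewrite !(dotvDl, dotvDr, dotvZl, dotvZr) (dotvC v u) (dotvC w u) (dotvC w v); ring. Qed.
Lemma CS_sq u v : dotv u v ^+ 2 <= dotv u u * dotv v v.
Proof.
have [a0|] := eqVneq (dotv u u) 0.
  rewrite (dotv_eq0 _ a0) -(scale0r (0:vec)) !dotvZl !mul0r expr0n /=; lra.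
move=> an0; have apos : 0 < dotv u u by rewrite lt_def an0 dotv_ge0.
have := dotv_ge0 (dotv u u *: v + (- dotv u v) *: u).
rewrite dot2 (dotvC v u) => h.
have : 0 <= dotv u u * (dotv u u * dotv v v - dotv u v ^+ 2) by nra.
by rewrite pmulr_rge0 // subr_ge0.
Qed.
Lemma CS u v : `|dotv u v| <= enorm u * enorm v.
Proof.
rewrite /enorm -sqrtrM ?dotv_ge0 // -sqrtr_sqr ler_sqrt ?CS_sq //.
by rewrite mulr_ge0 ?dotv_ge0.
Qed.
Lemma enormD u v : enorm (u + v) <= enorm u + enorm v.
Proof.
have h0 : 0 <= enorm u + enorm v by rewrite addr_ge0 ?enorm_ge0.
rewrite -(ger0_norm h0) -sqrtr_sqr {1}/enorm ler_sqrt ?sqr_ge0 //.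
rewrite dotvDl !dotvDr (dotvC v u) sqrrD !enorm_sq.
have := CS u v; have := ler_norm (dotv u v). lra.
Qed.
Lemma enormZ a u : enorm (a *: u) = `|a| * enorm u.
Proof. by rewrite /enorm dotvZl dotvZr mulrA -expr2 sqrtrM ?sqr_ge0 // sqrtr_sqr. Qed.
Lemma enormN u : enorm (- u) = enorm u.
Proof. by rewrite -scaleN1r enormZ normrN normr1 mul1r. Qed.
Lemma enorm0 : enorm (0 : vec) = 0.
Proof. by rewrite -(scale0r (0:vec)) enormZ normr0 mul0r. Qed.
Lemma enorm_gt0 u : u != 0 -> 0 < enorm u.
Proof.
move=> un; rewrite lt_def enorm_ge0 andbT; apply/eqP => h.
by move: un; rewrite (dotv_eq0 u (_ : dotv u u = 0)) ?eqxx // -enorm_sq h expr0n.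
Qed.
End Vec.

Section Lip.
Variables (R : realType) (d : nat).
Notation vec := 'rV[R]_d.

Lemma lip_local (G : vec -> vec) xb (c : R) : (lip G xb < c%:E)%E ->
  exists2 r : R, 0 < r & forall y y', enorm (y - xb) < r -> enorm (y' - xb) < r ->
    enorm (G y - G y') <= c * enorm (y - y').
Proof.
move=> /ereal_inf_lt [s [r r0 ->]] hs; exists r => // y y' hy hy'.
have [->|neq] := eqVneq y y'; first by rewrite !subrr enorm0 mulr0.
have pos : 0 < enorm (y - y') by apply: enorm_gt0; rewrite subr_eq0.
have : ((enorm (G y - G y') / enorm (y - y'))%:E < c%:E)%E.
  by apply: le_lt_trans hs; apply: ereal_sup_ubound; exists y, y'; split.
by rewrite lte_fin ltr_pdivrMr // => /ltW.
Qed.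

Lemma seg_lip (G : vec -> vec) (a b : vec) (c : R) :
 (forall t, 0 <= t <= 1 -> exists2 r : R, 0 < r & forall y y',
     enorm (y - (a + t *: (b - a))) < r -> enorm (y' - (a + t *: (b - a))) < r ->
     enorm (G y - G y') <= c * enorm (y - y')) ->
 enorm (G b - G a) <= c * enorm (b - a).
Proof.
move=> loc; set N := enorm (b - a).
pose h t := a + t *: (b - a).
have hd : forall s t, h s - h t = (s - t) *: (b - a).
  by move=> s t; apply/matrixP => i j; rewrite !mxE; ring.
have N0 : 0 <= N by apply: enorm_ge0.
have loc' : forall t, 0 <= t <= 1 -> exists2 del : R, 0 < del & forall s s',
    `|s - t| < del -> `|s' - t| < del ->
    enorm (G (h s) - G (h s')) <= c * N * `|s - s'|.
  move=> t /loc [r r0 H]; have N1 : 0 < N + 1 by lra.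
  exists (r / (N + 1)); first exact: divr_gt0.
  move=> s s' hs hs'; rewrite ltr_pdivlMr // in hs; rewrite ltr_pdivlMr // in hs'.
  have := H (h s) (h s'); rewrite !hd !enormZ -/N.
  have n1 := normr_ge0 (s - t); have n2 := normr_ge0 (s' - t).
  have -> : c * N * `|s - s'| = c * (`|s - s'| * N) by ring.
  apply; nra.
pose K := c * N.
pose A := [set t : R | 0 <= t <= 1 /\ forall s, 0 <= s <= t ->
   enorm (G (h s) - G (h 0)) <= K * s].
have A0 : A 0.
  split; first by rewrite lexx ler01.
  move=> s /andP[s0 s1]; have -> : s = 0 by lra.
  by rewrite subrr enorm0 mulr0.
have ub1 : ubound A 1 by move=> t [/andP[_ ?] _].
have hasA : has_sup A by split; [exists 0 | exists 1].
set T := sup A.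
have T0 : 0 <= T := sup_upper_bound hasA A0.
have T1 : T <= 1 := ge_sup (ex_intro _ 0 A0) ub1.
have [del del0 Hd] := loc' T (introT andP (conj T0 T1)).
have [t0 At0 t0gt] := sup_adherent del0 hasA; rewrite -/T in t0gt.
have t0le : t0 <= T := sup_upper_bound hasA At0.
have key : forall s1, 0 <= s1 <= 1 -> s1 <= T + del / 2 -> A s1.
  move=> s1 /andP[s10 s11] s1le; split; first by apply/andP.
  move=> s /andP[s0 ss1]; case: At0 => [/andP[t00 t01] Ht0].
  have [st0|t0s] := lerP s t0; first by apply: Ht0; apply/andP.
  have e1 : enorm (G (h s) - G (h t0)) <= c * N * `|s - t0|.
    apply: Hd; rewrite ltr_norml; apply/andP; split; lra.
  rewrite ger0_norm in e1; last lra.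
  have e2 := Ht0 t0 (introT andP (conj t00 (lexx t0))).
  have tri := @enormD _ _ (G (h s) - G (h t0)) (G (h t0) - G (h 0)).
  rewrite addrA subrK in tri.
  rewrite /K in e2 *; nra.
have hb : h 1 = b by rewrite /h scale1r addrC subrK.
have ha : h 0 = a by rewrite /h scale0r addr0.
case: (lerP (T + del / 2) 1) => h1.
  have Hs : A (T + del / 2) by apply: key; [apply/andP; split; lra | lra].
  have := sup_upper_bound hasA Hs; rewrite -/T; lra.
have [_ H1] := key 1 (introT andP (conj ler01 (lexx 1))) (ltW h1).
by have := H1 1 (introT andP (conj ler01 (lexx 1))); rewrite mulr1 hb ha.
Qed.
End Lip.
Theorem lemma2p9 (R : realType) (d : nat)
  (phi : 'rV[R]_d -> \bar R) (f : 'rV[R]_d -> R) (gradf : 'rV[R]_d -> 'rV[R]_d)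
  (U : set 'rV[R]_d) (lam : R) (prox : 'rV[R]_d -> 'rV[R]_d)
  (md : measure_display) (Omega : measurableType md) (P : probability Omega R)
  (F : nat -> set (set Omega))
  (alpha : nat -> R) (z0 : 'rV[R]_d)
  (g z x : nat -> Omega -> 'rV[R]_d) :
  convex_fun phi -> lsc phi -> proper_fun phi ->
  eopen U -> dom phi `<=` U -> C1_on U f gradf ->
  0 < lam -> is_prox phi lam prox ->
  filtration F ->
  (forall k, 0 < alpha k) ->
  (forall k, vec_measurable_wrt (F k.+1) (g k)) ->
  (forall w, z 0 w = z0) ->
  (forall k w, z k.+1 w = z k w - alpha k *: (g k w + grad_env prox lam (z k w))) ->
  (forall k w, x k w = prox (z k w)) ->
  let e k w := g k w - gradf (x k w) in
  let Lw w := ereal_sup [set lip gradf xb |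
                 xb in eclosure (conv_hull (range (fun k => x k w)))] in
  let Fn := Fnor gradf prox lam in
  forall (m n : nat) (w : Omega), (m < n)%N -> (Lw w < +oo)%E ->
  let L := fine (Lw w) in
  let tau := \sum_(m <= i < n) alpha i in
  let emn := - (\sum_(m <= i < n) alpha i *: (Fn (z i w) - Fn (z m w)))
             - \sum_(m <= i < n) alpha i *: e i w in
  let dx := x n w - x m w in
  let dg := gradf (x n w) - gradf (x m w) in
  enorm (Fn (z n w)) ^+ 2 <=
      (1 - tau / lam) ^+ 2 * enorm (Fn (z m w)) ^+ 2
    + (L ^+ 2 + 2 * L / lam + 1 / lam ^+ 2) * enorm dx ^+ 2
    + 1 / lam ^+ 2 * enorm emn ^+ 2
    + 2 / lam * (1 - tau / lam) * dotv (Fn (z m w)) (lam *: dg - dx + emn)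
    + 2 / lam * dotv dg emn
    - 2 / lam ^+ 2 * dotv emn dx.
Proof.
move=> _ _ _ _ _ _ lam0 _ _ _ _ _ Hz Hx e Lw Fn m n w mn Lfin.
cbv zeta.
set L := fine (Lw w).
set tau := \sum_(m <= i < n) alpha i.
set emn := - \sum_(m <= i < n) alpha i *: (Fn (z i w) - Fn (z m w)) - \sum_(m <= i < n) alpha i *: e i w.
set dx := x n w - x m w.
set dg := gradf (x n w) - gradf (x m w).

have lamn0 : lam != 0 by rewrite gt_eqF.
have Hstep : forall i, z i.+1 w - z i w = - (alpha i *: (Fn (z i w) + e i w)).
  move=> i; rewrite Hz /Fn /Fnor /e /grad_env -Hx.
  by apply/matrixP => a b; rewrite !mxE; ring.
have Hzn : z n w - z m w = - (tau *: Fn (z m w)) + emn.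
  have T := @telescope_sumr _ m n (fun k => z k w) (ltnW mn).
  rewrite /= in T; rewrite -T.
  under eq_bigr => i _ do rewrite Hstep.
  rewrite sumrN.
  have S : \sum_(m <= i < n) alpha i *: (Fn (z i w) + e i w) =
     \sum_(m <= i < n) alpha i *: (Fn (z i w) - Fn (z m w)) + tau *: Fn (z m w)
     + \sum_(m <= i < n) alpha i *: e i w.
    rewrite /tau scaler_suml -!big_split /=; apply: eq_bigr => i _.
    by apply/matrixP => a b; rewrite !mxE; ring.
  rewrite S /emn; apply/matrixP => a b; rewrite !mxE; ring.
have Ez : z n w = z m w + (- (tau *: Fn (z m w)) + emn) by rewrite -Hzn addrC subrK.
have HFm : Fn (z m w) = gradf (x m w) + lam^-1 *: (z m w - x m w) by rewrite /Fn /Fnor Hx.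
have H1 : Fn (z n w) = (1 - tau / lam) *: Fn (z m w) + lam^-1 *: (lam *: dg - dx + emn).
  have -> : Fn (z n w) = gradf (x n w) + lam^-1 *: (z n w - x n w) by rewrite /Fn /Fnor Hx.
  rewrite Ez HFm /dg /dx; apply/matrixP => a b; rewrite !mxE; field.
  exact: lamn0.
have Hlip : forall c, L < c -> enorm dg <= c * enorm dx.
  move=> c Lc; rewrite /dg /dx; apply: seg_lip => t /andP[t0 t1].
  apply: lip_local.
  set pt := x m w + t *: (x n w - x m w).
  have hpt : eclosure (conv_hull (range (fun k => x k w))) pt.
    move=> eps eps0; exists pt; split; last by rewrite subrr enorm0.
    exists 2%N, (fun i : 'I_2 => if val i == 0%N then 1 - t else t),
      (fun i : 'I_2 => if val i == 0%N then x m w else x n w).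
    split.
    - by move=> i; case: ifP => _; lra.
    - rewrite big_ord_recl big_ord1 /=; lra.
    - by move=> i; case: ifP => _; [exists m | exists n].
    - rewrite big_ord_recl big_ord1 /= /pt; apply/matrixP => i0 j0; rewrite !mxE; ring.
  have le1 : (lip gradf pt <= Lw w)%E by apply: ereal_sup_ubound; exists pt.
  have le2 : (Lw w <= L%:E)%E.
    by rewrite /L; case: (Lw w) Lfin => [r| |] //= _; rewrite ?lexx ?leNye.
  by apply: le_lt_trans (le_trans le1 le2) _; rewrite lte_fin.
have H2 : enorm dg <= L * enorm dx.
  apply/ler_addgt0Pr => eps eps0.
  have N0 : 0 <= enorm dx by apply: enorm_ge0.
  set q := eps / (enorm dx + 1).
  have q0 : 0 < q by apply: divr_gt0; lra.
  have hq : q * (enorm dx + 1) = eps by rewrite /q mulrVK // unitfE; lra.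
  have Lq : L < L + q by lra.
  have := Hlip (L + q) Lq; nra.

rewrite H1.
have EB : lam *: dg - dx + emn = lam *: dg + (-1) *: dx + 1 *: emn by rewrite scaleN1r scale1r.
rewrite EB !enorm_sq dot2 dot3 (@dotvC _ _ emn dx).
have CSd := @CS _ _ dg dx.
have Ng := @enorm_ge0 _ _ dg; have Nx := @enorm_ge0 _ _ dx.
have X1 : dotv dg dg <= L ^+ 2 * dotv dx dx by rewrite -!enorm_sq; nra.
have X2 : - dotv dg dx <= L * dotv dx dx.
  rewrite -enorm_sq; have := ler_norm (- dotv dg dx); rewrite normrN; nra.
rewrite -subr_ge0.
set G := (X in 0 <= X).
have -> : G = (L ^+ 2 * dotv dx dx - dotv dg dg) + 2 / lam * (L * dotv dx dx + dotv dg dx).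
  by rewrite /G; field; exact: lamn0.
have il : 0 < 2 / lam by rewrite divr_gt0.
have := mulr_ge0 (ltW il) (_ : 0 <= L * dotv dx dx + dotv dg dx); last by lra.
Qed.
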